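(* Let $n\ge2$, and let $\mathcal K\subseteq\mathbb C^n$ be a subset such that for every $V\in\mathcal Z_n$ the set $\mathcal K\cap P^{-1}(V)$ has exactly one element; let $K:=(P|_{\mathcal K})^{-1}:\mathcal Z_n\to\mathbb C^n$. Then $K$ is continuous from $(\mathcal Z_n,d_F)$ to $(\mathbb C^n,d_\infty)$ if and only if $\mathcal K$ is closed in $(\mathbb C^n,d_\infty)$.
   Context: $\mathcal Z_n$ denotes the family of all multisets of complex numbers with exactly $n$ elements counted with multiplicity, with metric $d_F(U,V):=\min_{\tau\in\Pi_n}\max_{1\le j\le n}|u_j-v_{\tau(j)}|$ for $U=\{u_1,\dots,u_n\}$, $V=\{v_1,\dots,v_n\}$, where $\Pi_n$ is the set of permutations of $\{1,\dots,n\}$. $\mathbb C^n$ carries the metric $d_\infty(\mathbf u,\mathbf v)=\max_j|u_j-v_j|$. The map $P:\mathbb C^n\to\mathcal Z_n$ sends $(v_1,\dots,v_n)$ to the multiset $\{v_1,\dots,v_n\}$ (with multiplicities). *)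

(* Defs.v *)
From HB Require Import structures.
From mathcomp Require Import all_boot all_order all_algebra all_fingroup.
From mathcomp Require Import finmap multiset.
From mathcomp Require Import complex.
From mathcomp Require Import reals.
Set Implicit Arguments. Unset Strict Implicit. Unset Printing Implicit Defensive.
Import Order.TTheory GRing.Theory Num.Theory.
Local Open Scope mset_scope.
Local Open Scope ring_scope.

Section Defs.
Variable R : realType.
Local Notation C := (R[i]).

Definition cmod (z : C) : R := Num.sqrt (complex.Re z ^+ 2 + complex.Im z ^+ 2).

Definition d_inf (n : nat) (u v : 'rV[C]_n) : R :=
  \big[Num.max/0]_(j < n) cmod (u 0 j - v 0 j).

Definition Pm (n : nat) (v : 'rV[C]_n) : {mset C} :=
  seq_mset [seq v 0 j | j <- enum 'I_n].

Definition inZ (n : nat) (U : {mset C}) : Prop := size U = n.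

Definition dF_perm (n : nat) (U V : {mset C}) (s : 'S_n) : R :=
  \big[Num.max/0]_(j < n) cmod (nth 0 (U : seq C) j - nth 0 (V : seq C) (s j)).
Definition d_F (n : nat) (U V : {mset C}) : R :=
  \big[Num.min/@dF_perm n U V 1%g]_(s : 'S_n) @dF_perm n U V s.

Definition closed_inf (n : nat) (S : 'rV[C]_n -> Prop) : Prop :=
  forall x : 'rV[C]_n,
    (forall e : R, 0 < e -> exists y, S y /\ d_inf x y < e) -> S x.

Definition continuous_ZF (n : nat) (K : {mset C} -> 'rV[C]_n) : Prop :=
  forall U, inZ n U -> forall e : R, 0 < e -> exists2 d : R, 0 < d &
    forall V, inZ n V -> d_F n U V < d -> d_inf (K U) (K V) < e.
End Defs.

(* Main.v *)
Require Import Defs.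
From HB Require Import structures.
From mathcomp Require Import all_boot all_order all_algebra all_fingroup.
From mathcomp Require Import finmap multiset complex reals.
From mathcomp Require Import lra.
From Stdlib Require Import Classical.
Import Order.TTheory GRing.Theory Num.Theory.
Local Open Scope mset_scope.
Local Open Scope ring_scope.

Section H.
Variable R : realType.
Local Notation C := (R[i]).



Lemma cmodC (z : C) : `|z| = ((cmod z)%:C)%C.
Proof. by rewrite normc_def. Qed.

Lemma cmod_ge0 (z : C) : 0 <= cmod z.
Proof. exact: sqrtr_ge0. Qed.

Lemma cmodN (z : C) : cmod (- z) = cmod z.
Proof. by apply: complexI; rewrite -!cmodC normrN. Qed.

Lemma cmodD (a b : C) : cmod (a + b) <= cmod a + cmod b.
Proof. by rewrite -lecR rmorphD /= -!cmodC ler_normD. Qed.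

Lemma cmod_eq0 (z : C) : cmod z = 0 -> z = 0.
Proof. by move=> h; apply/normr0_eq0; rewrite cmodC h. Qed.

Lemma cmod0 : cmod (0 : C) = 0.
Proof. by apply: complexI; rewrite -cmodC normr0. Qed.


Lemma size_Pm {n} (v : 'rV[C]_n) : size (Pm v : seq C) = n.
Proof.
by rewrite /Pm (perm_size (perm_eq_seq_mset _)) size_map size_enum_ord.
Qed.

Lemma Pm_nth {n} (v : 'rV[C]_n) : exists s : 'S_n,
  forall j : 'I_n, nth 0 (Pm v : seq C) j = v 0 (s j).
Proof.
have hs := size_Pm v.
pose t := mktuple (fun j : 'I_n => v ord0 j).
have : perm_eq (Pm v : seq C) t.
  rewrite /Pm (permPl (perm_eq_seq_mset _)) /t /=.
  by rewrite /image_mem enumT.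
move=> /tuple_permP [p hp]; exists p => j.
by rewrite hp (nth_map j) ?size_enum_ord // nth_ord_enum tnth_mktuple.
Qed.

Definition permv {n} (u : 'rV[C]_n) (p : 'S_n) : 'rV[C]_n := \row_j u 0 (p j).

Lemma Pm_permv {n} (u : 'rV[C]_n) p : Pm (permv u p) = Pm u.
Proof.
apply/eq_seq_msetP.
have -> : [seq permv u p 0 j | j <- enum 'I_n] = map (u 0) (map p (enum 'I_n)).
  by rewrite -[in RHS]map_comp; apply: eq_map => j; rewrite /permv mxE.
apply: perm_map; apply: uniq_perm.
- by rewrite map_inj_uniq ?enum_uniq //; apply: perm_inj.
- exact: enum_uniq.
- move=> i; rewrite mem_enum inE; apply/mapP; exists (p^-1 i)%g.
  by rewrite mem_enum. by rewrite permKV.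
Qed.

Lemma bigmax_ltP (I : finType) (F : I -> R) e : 0 < e ->
  (\big[Num.max/0]_(j : I) F j < e) <-> (forall j, F j < e).
Proof.
move=> e0; split.
- by move=> h j; apply: le_lt_trans h; apply: le_bigmax.
- by move=> h; elim/big_ind: _ => // x y hx hy; rewrite gt_max hx hy.
Qed.

Lemma dinf_lt {n} (u v : 'rV[C]_n) e : 0 < e ->
  d_inf u v < e <-> (forall j, cmod (u 0 j - v 0 j) < e).
Proof. exact: bigmax_ltP. Qed.

Lemma dFperm_lt (n : nat) (U V : {mset C}) s e : 0 < e ->
  dF_perm U V s < e <-> (forall j : 'I_n,
     cmod (nth 0 (U : seq C) j - nth 0 (V : seq C) (s j)) < e).
Proof. exact: bigmax_ltP. Qed.

Lemma dF_lt (n : nat) (U V : {mset C}) e :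
  d_F n U V < e -> exists s : 'S_n, dF_perm U V s < e.
Proof.
move=> h; case: (boolP [exists s : 'S_n, dF_perm U V s < e]).
  by move/existsP.
rewrite negb_exists => /forallP hs; exfalso.
suff : e <= d_F n U V by rewrite leNgt h.
by apply: le_bigmin => [|s _]; rewrite leNgt; apply: hs.
Qed.

Lemma dF_le (n : nat) (U V : {mset C}) (s : 'S_n) : d_F n U V <= dF_perm U V s.
Proof. exact: bigmin_le. Qed.
Lemma dF_small (n : nat) (a b : 'rV[C]_n) d : 0 < d ->
  d_inf a b < d -> d_F n (Pm a) (Pm b) < d.
Proof.
move=> d0 /(dinf_lt _ _ _ d0) h.
have [sa ha] := Pm_nth a; have [sb hb] := Pm_nth b.
apply: le_lt_trans (dF_le _ _ _ (sa * sb^-1)%g) _.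
apply/(dFperm_lt _ _ _ _ _ d0) => j.
by rewrite ha hb permM permKV.
Qed.

Lemma dF_to_perm (n : nat) (u w : 'rV[C]_n) d : 0 < d ->
  d_F n (Pm u) (Pm w) < d -> exists p : 'S_n, d_inf (permv u p) w < d.
Proof.
move=> d0 /dF_lt [s /(dFperm_lt _ _ _ _ _ d0) hs].
have [s1 h1] := Pm_nth u; have [s2 h2] := Pm_nth w.
exists (s2^-1 * s^-1 * s1)%g; apply/(dinf_lt _ _ _ d0) => k.
have := hs (s^-1 (s2^-1 k))%g.
by rewrite h1 h2 !permKV /permv mxE !permM.
Qed.
End H.
Arguments permv {R n}.

Lemma common_pos (R : realType) (I : eqType) (Q : I -> R -> Prop) (l : seq I) :
  (forall i d d', 0 < d' -> d' <= d -> Q i d -> Q i d') ->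
  (forall i, exists2 d, 0 < d & Q i d) ->
  exists2 d, 0 < d & forall i, i \in l -> Q i d.
Proof.
move=> hm hex; elim: l => [|i l [d2 d20 h2]].
  by exists 1 => //.
have [d1 d10 h1] := hex i.
exists (Num.min d1 d2); first by rewrite lt_min d10 d20.
move=> j; rewrite inE => /orP [/eqP ->|jl].
  by apply: hm h1; rewrite ?lt_min ?d10 ?d20 // ge_min lexx.
by apply: hm (h2 _ jl); rewrite ?lt_min ?d10 ?d20 // ge_min lexx orbT.
Qed.

Theorem theorem4p1 (R : realType) (n : nat) (hn : (2 <= n)%N)
  (Kset : 'rV[R[i]]_n -> Prop)
  (hK : forall V : {mset R[i]}, inZ n V -> exists! v, Kset v /\ Pm v = V)
  (K : {mset R[i]} -> 'rV[R[i]]_n)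
  (hKdef : forall V : {mset R[i]}, inZ n V -> Kset (K V) /\ Pm (K V) = V) :
  continuous_ZF K <-> closed_inf Kset.
Proof.
have uniqK : forall v, Kset v -> K (Pm v) = v.
  move=> v kv; have hV : inZ n (Pm v) by rewrite /inZ size_Pm.
  have [w [_ hw]] := hK _ hV.
  by rewrite -(hw _ (hKdef _ hV)); apply: hw.
split.
- move=> hc x hx.
  have hU : inZ n (Pm x) by rewrite /inZ size_Pm.
  suff -> : x = K (Pm x) by case: (hKdef _ hU).
  apply/matrixP => i j; rewrite (ord1 i); apply/eqP; rewrite -subr_eq0; apply/eqP.
  apply: cmod_eq0; apply/eqP; rewrite eq_le cmod_ge0 andbT.
  set c := cmod _.
  have key : forall e, 0 < e -> c < e + e.
    move=> e e0.
    have [d d0 hd] := hc _ hU e e0.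
    have me0 : 0 < Num.min d e by rewrite lt_min d0 e0.
    have [y [ky hxy]] := hx _ me0.
    have hV : inZ n (Pm y) by rewrite /inZ size_Pm.
    have hxy' := hxy; move: hxy'.
    move=> /(dinf_lt _ _ _ _ me0) /(_ j) hj.
    have hdF : d_F n (Pm x) (Pm y) < d.
      apply: dF_small => //; apply: lt_le_trans hxy _; by rewrite ge_min lexx.
    have := hd _ hV hdF; rewrite (uniqK y ky) => /(dinf_lt _ _ _ _ e0) /(_ j) hj2.
    rewrite /c.
    have -> : x 0 j - K (Pm x) 0 j = (x 0 j - y 0 j) + - (K (Pm x) 0 j - y 0 j)
      by rewrite opprB addrA subrK.
    apply: le_lt_trans (cmodD _ _ _) _; rewrite cmodN.
    have : cmod (x 0 j - y 0 j) < e by apply: lt_le_trans hj _; rewrite ge_min lexx orbT.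
    move: hj2; lra.
  rewrite leNgt; apply/negP => c0.
  have h2 : 0 < c / 2%:R by lra.
  have := key _ h2; lra.
- move=> hcl U hU e e0.
  pose u := K U.
  pose Q := fun (p : 'S_n) (d : R) => Kset (permv u p) \/
      forall y, Kset y -> d <= d_inf (permv u p) y.
  have [d0 d00 hd0] : exists2 d, 0 < d & forall p, p \in enum 'S_n -> Q p d.
    apply: common_pos.
      move=> p d d' _ le [h|h]; [by left| right => y ky].
      by apply: le_trans le (h y ky).
    move=> p; case: (classic (Kset (permv u p))) => kp.
      by exists 1 => //; left.
    have : ~ (forall e, 0 < e -> exists y, Kset y /\ d_inf (permv u p) y < e).
      by move=> H; apply: kp; apply: hcl.
    move=> /not_all_ex_not [d H]; case: (imply_to_and _ _ H) => d0 hnd.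
    exists d => //; right => y ky; rewrite leNgt; apply/negP => hy.
    by apply: hnd; exists y.
  exists (Num.min d0 e); first by rewrite lt_min d00 e0.
  move=> V hV hdF.
  have md0 : 0 < Num.min d0 e by rewrite lt_min d00 e0.
  have [kU pU] := hKdef _ hU; have [kV pV] := hKdef _ hV.
  have [p hp] : exists p : 'S_n, d_inf (permv u p) (K V) < Num.min d0 e.
    by apply: dF_to_perm => //; rewrite /u pU pV.
  case: (hd0 p); first by rewrite mem_enum.
  + move=> kp.
    have hup : permv u p = u by rewrite -{1}(uniqK _ kp) Pm_permv /u pU.
    by move: hp; rewrite hup => /lt_le_trans; apply; rewrite ge_min lexx orbT.
  + move=> h; have := h _ kV => /le_lt_trans /(_ hp).
    by rewrite lt_min ltxx.
Qed.
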